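(* Let $G$ be an abelian group with torsion subgroup $T$. If both $T$ and $G/T$ are strongly co-Hopfian, then $G$ is strongly co-Hopfian.
   Context: All groups are abelian. A group $G$ is strongly co-Hopfian if for every endomorphism $f$ of $G$ there is $n\in\mathbb N$ with $f^n(G)=f^{n+1}(G)$. $T$ denotes the maximal torsion subgroup of $G$. *)

(* Defs.v *)
From HB Require Import structures.
From mathcomp Require Import all_boot all_order all_algebra.
From mathcomp Require Import boolp classical_sets.
Set Implicit Arguments. Unset Strict Implicit. Unset Printing Implicit Defensive.
Import GRing.Theory.
Local Open Scope ring_scope.

Definition torsion (G : zmodType) (x : G) : Prop :=
  exists n : nat, (0 < n)%N /\ x *+ n = 0.

Definition strongly_coHopfian (G : zmodType) : Prop :=
  forall f : {additive G -> G},
    exists n : nat, range (iter n f) = range (iter n.+1 f).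

(* Main.v *)
Require Import Defs.
From HB Require Import structures.
From mathcomp Require Import all_boot all_order all_algebra.
From mathcomp Require Import boolp classical_sets.
Local Open Scope ring_scope.
Import GRing.Theory.

Section Wrap.
Variables (U V : zmodType) (g : U -> V) (H : zmod_morphism g).
Definition wrapf (H' : zmod_morphism g) : U -> V := g.
HB.instance Definition _ := GRing.isZmodMorphism.Build U V (wrapf H) H.
End Wrap.

Lemma iter_add (U : zmodType) (f : {additive U -> U}) n (a b : U) :
  iter n f (a + b) = iter n f a + iter n f b.
Proof. by elim: n => //= n ->; rewrite raddfD. Qed.

Lemma stab_iter (A : Type) (g : A -> A) n :
  range (iter n g) = range (iter n.+1 g) ->
  forall j s, exists u, iter n g s = iter (n + j) g u.
Proof.
move=> hn; elim=> [|j IH] s; first by exists s; rewrite addn0.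
have [u ->] := IH s.
have : range (iter n g) (iter n g u) by exists u.
rewrite hn => -[v _ hv].
exists v; rewrite addnC iterD -hv -iterD addnC addnS.
by [].
Qed.

Theorem mainTheorem4 (G T Q : zmodType)
    (i : {additive T -> G}) (p : {additive G -> Q})
    (i_inj : injective i)
    (i_img : forall x : G, torsion x <-> exists t : T, i t = x)
    (p_surj : forall q : Q, exists x : G, p x = q)
    (p_ker : forall x : G, p x = 0 <-> torsion x) :
  strongly_coHopfian T -> strongly_coHopfian Q -> strongly_coHopfian G.
Proof.
move=> hT hQ f.
have ftor : forall x, torsion x -> torsion (f x).
  by move=> x [n [n0 hn]]; exists n; split => //; rewrite -raddfMn hn raddf0.
have [sec secK] := choice p_surj.
have [iinv iinvK] : {iinv : G -> T & forall x, torsion x -> i (iinv x) = x}.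
  apply: (@choice G T (fun x t => torsion x -> i t = x)) => x.
  case: (EM (torsion x)) => [/i_img [t ht]|nt]; first by exists t.
  by exists 0 => /nt.
have itor : forall t, torsion (i t) by move=> t; apply/i_img; exists t.
pose fT0 := fun t => iinv (f (i t)).
have fTK : forall t, i (fT0 t) = f (i t) by move=> t; rewrite /fT0 iinvK //; apply/ftor/itor.
have fTm : zmod_morphism fT0.
  rewrite /zmod_morphism.
  by move=> a b /=; apply: i_inj; rewrite raddfB !fTK !raddfB.
pose fT := @wrapf _ _ _ fTm : {additive T -> T}.
pose fQ0 := fun q => p (f (sec q)).
have fQK : forall x, fQ0 (p x) = p (f x).
  move=> x; apply/eqP; rewrite -subr_eq0 -!raddfB; apply/eqP/p_ker/ftor/p_ker.
  by rewrite raddfB secK subrr.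
have fQm : zmod_morphism fQ0.
  rewrite /zmod_morphism.
  by move=> a b /=; rewrite -(secK a) -(secK b) -raddfB !fQK !raddfB.
pose fQ := @wrapf _ _ _ fQm : {additive Q -> Q}.
have iT : forall n s, i (iter n fT s) = iter n f (i s).
  by elim=> //= n IH s; rewrite -IH [i (fT _)]fTK.
have pQ : forall n x, p (iter n f x) = iter n fQ (p x).
  by elim=> //= n IH x; rewrite -IH [fQ _]fQK.
have [n hn] := hT fT.
have [m hm] := hQ fQ.
exists (m + n)%N; rewrite eqEsubset; split; last first.
  by move=> y [z _ <-]; exists (f z) => //; rewrite iterSr.
move=> y [x _ <-].
have : range (iter m fQ) (iter m fQ (p x)) by exists (p x).
rewrite hm => -[q _ hq].
set z := sec q.
have ht : p (iter m f x - iter m.+1 f z) = 0.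
  by rewrite raddfB !pQ /z secK hq subrr.
have [s hs] := proj1 (i_img _) (proj1 (p_ker _) ht).
have [s2 hs2] := @stab_iter _ _ _ hn m.+1 s.
exists (i s2 + z) => //; apply: esym.
have hx : iter m f x = i s + iter m.+1 f z by rewrite hs subrK.
have -> : (m + n).+1 = (n + m.+1)%N by rewrite addnS addnC.
rewrite [(m + n)%N]addnC iterD hx iter_add -iterD -iT hs2 iT iter_add.
by [].
Qed.
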